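(* Let $(G,\mathcal{T},(A^\circ,B^\circ),k)$ be a maximal Terminal Separation instance. If $A$ is a terminal-free $A^\circ$-extension with $d(A)-d(A^\circ)=1$, then there exists an integral terminal separation $(A^\ast,B^\ast)$ extending $(A^\circ,B^\circ)$ that has minimum cost among all integral terminal separations extending $(A^\circ,B^\circ)$, such that $A\setminus A^\circ\subseteq A^\ast$ or $A\setminus A^\circ\subseteq B^\ast$.
   Context: Graphs may have multiple edges but no loops; $d(A)$ is the number of edges with exactly one endpoint in $A$. For a family $\mathcal{T}$ of pairwise disjoint vertex pairs (terminals are their vertices), a terminal separation is a pair $(A,B)$ of disjoint vertex sets such that each pair in $\mathcal{T}$ either has one vertex in $A$ and one in $B$ or is disjoint from $A\cup B$; it is integral if $A\cup B=V(G)$; $(A',B')$ extends $(A,B)$ if $A\subseteq A'$, $B\subseteq B'$; cost $c(A,B)=(d(A)+d(B))/2$; $(A,B)$ is maximal if every other terminal separation extending it has strictly larger cost. A Terminal Separation instance $(G,\mathcal{T},(A^\circ,B^\circ),k)$ has every terminal of degree at most one and $(A^\circ,B^\circ)$ a terminal separation; it is maximal if $(A^\circ,B^\circ)$ is maximal. A set $A$ is an $A^\circ$-extension if $A^\circ\subseteq A\subseteq V(G)\setminus B^\circ$; it is terminal-free if $A\setminus A^\circ$ contains no terminal. *)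

(* Defs.v *)
From mathcomp Require Import all_boot all_order all_algebra.
Set Implicit Arguments. Unset Strict Implicit. Unset Printing Implicit Defensive.
Import GRing.Theory Num.Theory.

(* A multigraph without loops: vertex type V, edge type E (so parallel edges
   are allowed), each edge e having endpoints (ends e).1 and (ends e).2. *)
Definition loopless (V E : finType) (ends : E -> V * V) : Prop :=
  forall e, (ends e).1 != (ends e).2.

Definition dcut (V E : finType) (ends : E -> V * V) (A : {set V}) : nat :=
  #|[set e : E | ((ends e).1 \in A) != ((ends e).2 \in A)]|.

Definition degree (V E : finType) (ends : E -> V * V) (v : V) : nat :=
  #|[set e : E | ((ends e).1 == v) || ((ends e).2 == v)]|.

Definition pair_family (V : finType) (T : {set {set V}}) : Prop :=
  (forall P, P \in T -> #|P| = 2) /\ trivIset T.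

Definition terminals (V : finType) (T : {set {set V}}) : {set V} := cover T.

Definition terminal_separation (V : finType) (T : {set {set V}})
    (A B : {set V}) : Prop :=
  [disjoint A & B] /\
  forall P, P \in T ->
    (#|P :&: A| = 1 /\ #|P :&: B| = 1) \/ [disjoint P & A :|: B].

Definition integral (V : finType) (A B : {set V}) : Prop :=
  A :|: B = [set: V].

Definition extends (V : finType) (A B A' B' : {set V}) : Prop :=
  A \subset A' /\ B \subset B'.

Definition cost (V E : finType) (ends : E -> V * V) (A B : {set V}) : rat :=
  ((dcut ends A + dcut ends B)%:R / 2%:R)%R.

Definition maximal_sep (V E : finType) (ends : E -> V * V)
    (T : {set {set V}}) (A B : {set V}) : Prop :=
  forall A' B', terminal_separation T A' B' -> extends A B A' B' ->
    (A', B') <> (A, B) -> (cost ends A B < cost ends A' B')%R.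

Definition TS_instance (V E : finType) (ends : E -> V * V)
    (T : {set {set V}}) (A0 B0 : {set V}) (k : nat) : Prop :=
  loopless ends /\ pair_family T /\
  (forall v, v \in terminals T -> degree ends v <= 1) /\
  terminal_separation T A0 B0.

Definition maximal_TS_instance (V E : finType) (ends : E -> V * V)
    (T : {set {set V}}) (A0 B0 : {set V}) (k : nat) : Prop :=
  TS_instance ends T A0 B0 k /\ maximal_sep ends T A0 B0.

Definition extension (V : finType) (A0 B0 A : {set V}) : Prop :=
  A0 \subset A /\ A \subset ~: B0.

Definition terminal_free (V : finType) (T : {set {set V}}) (A0 A : {set V}) : Prop :=
  [disjoint A :\: A0 & terminals T].

(* Main.v *)
Require Import Defs.
From mathcomp Require Import all_boot all_order all_algebra.
From mathcomp Require Import zify.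
From Stdlib Require Import Classical.
Import Order.TTheory GRing.Theory Num.Theory.

Lemma card_setE (E : finType) (p : pred E) : #|[set e | p e]| = \sum_e (p e : nat).
Proof.
rewrite -sum1_card big_mkcond /=; apply: eq_bigr => e _; rewrite inE; by case: (p e).
Qed.

Lemma dcut_sum (V E : finType) (ends : E -> V * V) (A : {set V}) :
  dcut ends A = \sum_e ((((ends e).1 \in A) != ((ends e).2 \in A)) : nat).
Proof. rewrite /dcut; exact: card_setE. Qed.

Lemma dcut_sub (V E : finType) (ends : E -> V * V) (X Y : {set V}) :
  dcut ends (X :|: Y) + dcut ends (X :&: Y) <= dcut ends X + dcut ends Y.
Proof.
rewrite !dcut_sum -!big_split /=; apply: leq_sum => e _; rewrite !inE.
by case: ((ends e).1 \in X); case: ((ends e).2 \in X); case: ((ends e).1 \in Y);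
  case: ((ends e).2 \in Y).
Qed.

Lemma dcutC (V E : finType) (ends : E -> V * V) (X : {set V}) :
  dcut ends (~: X) = dcut ends X.
Proof.
rewrite !dcut_sum; apply: eq_bigr => e _; rewrite !inE.
by case: ((ends e).1 \in X); case: ((ends e).2 \in X).
Qed.

Lemma cost_le (V E : finType) (ends : E -> V * V) (A B A' B' : {set V}) :
  (cost ends A B <= cost ends A' B')%R =
  (dcut ends A + dcut ends B <= dcut ends A' + dcut ends B')%N.
Proof. by rewrite /cost ler_pM2r ?invr_gt0 ?ltr0n // ler_nat. Qed.

Lemma cost_lt (V E : finType) (ends : E -> V * V) (A B A' B' : {set V}) :
  (cost ends A B < cost ends A' B')%R =
  (dcut ends A + dcut ends B < dcut ends A' + dcut ends B')%N.
Proof. by rewrite /cost ltr_pM2r ?invr_gt0 ?ltr0n // ltr_nat. Qed.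

Lemma compl_int (V : finType) (A B : {set V}) :
  [disjoint A & B] -> A :|: B = setT -> B = ~: A.
Proof.
move=> d i; apply/setP => x; rewrite inE.
case hA: (x \in A) => /=; first exact: (disjointFr d hA).
have: x \in A :|: B by rewrite i in_setT.
by rewrite inE hA.
Qed.
Arguments compl_int {V A B}.

Lemma triv_eq (V : finType) (T : {set {set V}}) (P Q : {set V}) x :
  trivIset T -> P \in T -> Q \in T -> x \in P -> x \in Q -> P = Q.
Proof.
move/trivIsetP=> tT PT QT xP xQ; apply/eqP; apply/negPn/negP=> neq.
by have := disjointFr (tT _ _ PT QT neq) xP; rewrite xQ.
Qed.
Arguments triv_eq {V T P Q x}.

Lemma witness (V : finType) (T : {set {set V}}) (A0 B0 : {set V}) :
  pair_family T -> terminal_separation T A0 B0 ->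
  exists A1 B1, [/\ terminal_separation T A1 B1, integral A1 B1 & extends A0 B0 A1 B1].
Proof.
move=> [p2 tT] [d0 h0].
pose X := [set v | [exists P : {set V}, [&& P \in T, v \in P,
   [disjoint P & A0 :|: B0] & [exists u, (u \in P) && (enum_rank u < enum_rank v)]]]].
have hX : forall v, v \in X -> exists2 P, P \in T &
    [/\ v \in P, [disjoint P & A0 :|: B0] & exists2 u, u \in P & enum_rank u < enum_rank v].
  move=> v; rewrite inE => /existsP [P /and4P [PT vP dP /existsP [u /andP [uP lt]]]].
  exists P => //; split => //; by exists u.
have hXin : forall v P u, P \in T -> v \in P -> [disjoint P & A0 :|: B0] ->
    u \in P -> enum_rank u < enum_rank v -> v \in X.
  move=> v P u PT vP dP uP lt; rewrite inE; apply/existsP; exists P.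
  rewrite PT vP dP /=; apply/existsP; exists u; by rewrite uP lt.
clearbody X.
pose Bw := B0 :|: X.
have hXA : forall v, v \in X -> v \notin A0 :|: B0.
  move=> v /hX [P _ [vP dP _]]; by rewrite (disjointFr dP vP).
exists (~: Bw), Bw; split.
- split; first by rewrite -setI_eq0 setIC setICr.
  move=> Q QT.
  have hQB : #|Q :&: Bw| = 1 -> #|Q :&: ~: Bw| = 1.
    by rewrite -setDE cardsD (p2 Q QT) => ->.
  left; suff h : #|Q :&: Bw| = 1 by split => //; exact: hQB.
  case: (boolP [disjoint Q & A0 :|: B0]) => dQ.
  + have /cards2P [x [y [xy Qe]]] : #|Q| == 2 by rewrite p2.
    have claim : forall a b, Q = [set a; b] -> enum_rank a < enum_rank b ->
        Q :&: Bw = [set b].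
      move=> a b Qab lt; apply/setP => z; rewrite in_setI in_setU in_set1.
      case zQ: (z \in Q) => /=; last first.
        case: eqP => // zb; by rewrite zb Qab !inE eqxx orbT in zQ.
      have: z \in [set a; b] by rewrite -Qab.
      rewrite !inE => /orP [/eqP za | /eqP zb].
      * subst z.
        have ab : (a == b) = false.
          by apply/negP => /eqP ab; rewrite ab ltnn in lt.
        have := disjointFr dQ zQ; rewrite in_setU => /norP [_ /negbTE ->]; rewrite ab /=.
        apply/negbTE/negP => /hX [P PT [aP dP [u uP ltu]]].
        have PQ := triv_eq tT PT QT aP zQ.
        move: uP; rewrite PQ Qab !inE => /orP [/eqP ua | /eqP ub].
        - by rewrite ua ltnn in ltu.
        - by rewrite ub in ltu; have := ltn_trans lt ltu; rewrite ltnn.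
      * subst z; rewrite eqxx; apply/orP; right.
        apply: (hXin b Q a QT zQ dQ _ lt); by rewrite Qab !inE eqxx.
    have nr : enum_rank x != enum_rank y by rewrite (inj_eq enum_rank_inj).
    case: (ltngtP (enum_rank x) (enum_rank y)) nr => cmp nr.
    * by rewrite (claim x y) ?cards1.
    * by rewrite (claim y x) ?cards1 // Qe setUC.
    * move: nr; rewrite -(inj_eq val_inj) /= cmp eqxx //.
  + have [[_ h1] | ] := h0 Q QT; last by rewrite (negbTE dQ).
    suff -> : Q :&: Bw = Q :&: B0 by []; apply/setP => z; rewrite !in_setI in_setU.
    case zQ: (z \in Q) => //=.
    case zX: (z \in X); rewrite ?orbT ?orbF //.
    move: zX => /hX [P PT [zP dP _]].
    have PQ := triv_eq tT PT QT zP zQ.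
    by rewrite PQ (negbTE dQ) in dP.
- by rewrite /integral setUC setUCr.
- split; last exact: subsetUl.
  apply/subsetP => x xA; rewrite in_setC in_setU negb_or (disjointFr d0 xA) /=.
  apply/negP => /hXA; by rewrite in_setU xA.
Qed.
Arguments witness {V T A0 B0}.

Lemma exists_opt (V E : finType) (ends : E -> V * V) (T : {set {set V}})
    (A0 B0 A1 B1 : {set V}) :
  terminal_separation T A1 B1 -> integral A1 B1 -> extends A0 B0 A1 B1 ->
  exists As Bs : {set V},
    [/\ terminal_separation T As Bs, integral As Bs, extends A0 B0 As Bs &
        (forall A' B', terminal_separation T A' B' -> integral A' B' ->
           extends A0 B0 A' B' -> (cost ends As Bs <= cost ends A' B')%R)].
Proof.
move=> h1 h2 h3; move: (leqnn (dcut ends A1 + dcut ends B1)).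
move: {2}(_ + _) => n; elim: n A1 B1 h1 h2 h3 => [|n IH] A1 B1 h1 h2 h3 hn.
  case: (classic (exists A' B', [/\ terminal_separation T A' B', integral A' B',
     extends A0 B0 A' B' & dcut ends A' + dcut ends B' < dcut ends A1 + dcut ends B1]))
    => [[A' [B' [_ _ _ lt]]] | nex].
    by have := leq_trans lt hn.
  exists A1, B1; split => // A' B' t i e; rewrite cost_le leqNgt; apply/negP => lt.
  by apply: nex; exists A', B'.
case: (classic (exists A' B', [/\ terminal_separation T A' B', integral A' B',
   extends A0 B0 A' B' & dcut ends A' + dcut ends B' < dcut ends A1 + dcut ends B1]))
  => [[A' [B' [t i e lt]]] | nex].
  apply: (IH A' B' t i e); rewrite -ltnS; exact: leq_trans lt hn.
exists A1, B1; split => // A' B' t i e; rewrite cost_le leqNgt; apply/negP => lt.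
by apply: nex; exists A', B'.
Qed.
Arguments exists_opt {V E} ends {T A0 B0 A1 B1}.

Theorem lemma4p3 (V E : finType) (ends : E -> V * V) (T : {set {set V}})
    (A0 B0 : {set V}) (k : nat) (A : {set V}) :
  maximal_TS_instance ends T A0 B0 k ->
  extension A0 B0 A -> terminal_free T A0 A ->
  dcut ends A = (dcut ends A0).+1 ->
  exists As Bs : {set V},
    [/\ terminal_separation T As Bs, integral As Bs, extends A0 B0 As Bs,
        (forall A' B', terminal_separation T A' B' -> integral A' B' ->
           extends A0 B0 A' B' -> (cost ends As Bs <= cost ends A' B')%R)
      & (A :\: A0 \subset As) \/ (A :\: A0 \subset Bs)].
Proof.
move=> [[_ [pf [_ tsAB]]] mx] [A0A AB0] tf dA.
have [A1 [B1 [t1 i1 e1]]] := witness pf tsAB.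
have [As [Bs [tS iS [eA eB] opt]]] := exists_opt ends t1 i1 e1.
have hPA : forall P, P \in T -> P :&: A = P :&: A0.
  move=> P PT; apply/setP => x; rewrite !in_setI.
  case xP: (x \in P) => //=; apply/idP/idP; last exact: (subsetP A0A).
  move=> xA; apply/negPn/negP => xA0.
  have xD : x \in A :\: A0 by rewrite inE xA0 xA.
  have xc : x \in terminals T by apply/bigcupP; exists P.
  by rewrite (disjointFr tf xD) in xc.
have dS : forall x, x \in As -> x \in Bs = false by move=> x; apply: disjointFr tS.1.
case: (boolP (As :&: A == A0)) => [/eqP hI | hI].
  exists As, Bs; split => //; right.
  apply/subsetP => x; rewrite inE => /andP [xA0 xA].
  have xAs : x \notin As.
    apply/negP => xAs; have : x \in As :&: A by rewrite inE xAs xA.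
    by rewrite hI (negbTE xA0).
  have : x \in As :|: Bs by rewrite iS in_setT.
  by rewrite inE (negbTE xAs).
have eqI : forall P, P \in T -> P :&: (As :&: A) = P :&: A0.
  by move=> P PT; rewrite setICA hPA // setICA (setIidPr eA).
have tI : terminal_separation T (As :&: A) B0.
  split.
    rewrite disjoints_subset; exact: subset_trans (subsetIr _ _) AB0.
  move=> P PT; have := tsAB.2 P PT.
  by rewrite -!setI_eq0 !setIUr eqI.
have ext : extends A0 B0 (As :&: A) B0.
  by split; [rewrite subsetI eA A0A | exact: subxx].
have : (As :&: A, B0) <> (A0, B0).
  by case => h; rewrite h eqxx in hI.
move/(mx _ _ tI ext); rewrite cost_lt ltn_add2r => hlt.
have sub := @dcut_sub _ _ ends As A.
have le : dcut ends (As :|: A) <= dcut ends As by lia.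
have disN : [disjoint As :|: A & Bs :\: A].
  rewrite -setI_eq0; apply/eqP/setP => x; rewrite !inE.
  case xA: (x \in A); rewrite ?andbF ?orbT ?andbT //=.
  by case xAs: (x \in As) => //=; rewrite dS.
have intN : integral (As :|: A) (Bs :\: A).
  apply/setP => x; rewrite !inE.
  have : x \in As :|: Bs by rewrite iS in_setT.
  rewrite inE => /orP [-> // | ->].
  by case: (x \in A); rewrite ?orbT.
exists (As :|: A), (Bs :\: A); split => //.
- split => // P PT.
  have eqA' : P :&: (As :|: A) = P :&: As.
    rewrite setIUr hPA //; apply/setUidPl; exact: setIS.
  have eqB' : P :&: (Bs :\: A) = P :&: Bs.
    apply/setP => x; rewrite !inE.
    case xP: (x \in P) => //=; case xB: (x \in Bs); rewrite ?andbF //= andbT.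
    apply/negP => xA.
    have : x \in P :&: A by rewrite inE xP xA.
    rewrite hPA // inE => /andP [_ /(subsetP eA) xAs].
    by rewrite dS in xB.
  rewrite eqA' eqB' -setI_eq0 setIUr eqA' eqB' -setIUr setI_eq0; exact: tS.2 P PT.
- split; first exact: (subset_trans eA (subsetUl _ _)).
  apply/subsetP => x xB; rewrite inE (subsetP eB _ xB) andbT.
  apply/negP => xA; have := subsetP AB0 _ xA; by rewrite inE xB.
- move=> A' B' t i e; apply: le_trans (opt _ _ t i e).
  rewrite cost_le (compl_int disN intN) (compl_int tS.1 iS) !dcutC; lia.
- left; apply/subsetP => x; rewrite !inE => /andP [_ ->]; by rewrite orbT.
Qed.
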